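(* For every $n\ge 4$, the pendant path graph $P_n^*$ is not $n$-EKR.
   Context: An independent $r$-set of a graph $G$ is a set of $r$ pairwise non-adjacent vertices; $\mathcal{I}^{(r)}(G)$ is the family of all independent $r$-sets, and $\mathcal{I}^{(r)}_v(G)$ the subfamily of those containing $v$ (the $r$-star centred at $v$). A family is intersecting if every two members have nonempty intersection. $G$ is $r$-EKR if some $r$-star $\mathcal{I}^{(r)}_v(G)$ has size equal to the maximum size of an intersecting subfamily of $\mathcal{I}^{(r)}(G)$. For a graph $G$ with vertices $x_1,\dots,x_n$, the pendant graph $G^*$ has vertex set $\{x_1,\dots,x_n\}\sqcup\{p_1,\dots,p_n\}$ and edge set $E(G)\sqcup\{x_1p_1,\dots,x_np_n\}$. $P_n$ is the path with vertices $x_1,\dots,x_n$ and edges $x_jx_{j+1}$, and $P_n^*$ its pendant graph. *)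

(* Defs.v *)
(* A (simple) graph is a relation [e : rel V] on a finType V
   (we only use it symmetric and irreflexive). *)
From mathcomp Require Import all_boot all_order.
Set Implicit Arguments. Unset Strict Implicit. Unset Printing Implicit Defensive.

Section Graphs.
Variable V : finType.
Variable e : rel V.

Definition indep_set (A : {set V}) : bool :=
  [forall x in A, forall y in A, ~~ e x y].

Definition indep_r (r : nat) : {set {set V}} :=
  [set A : {set V} | indep_set A && (#|A| == r)].

Definition star_r (r : nat) (v : V) : {set {set V}} :=
  [set A in indep_r r | v \in A].

Definition intersecting (F : {set {set V}}) : bool :=
  [forall A in F, forall B in F, A :&: B != set0].

Definition max_intersecting (r : nat) : nat :=
  \max_(F : {set {set V}} | (F \subset indep_r r) && intersecting F) #|F|.

Definition EKR (r : nat) : Prop :=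
  exists v : V, #|star_r r v| = max_intersecting r.
End Graphs.

(* pendant graph G^* : vertices inl x (original) and inr x (pendant p_x) *)
Definition pendant (T : finType) (e : rel T) : rel (T + T)%type :=
  fun u w =>
    match u, w with
    | inl a, inl b => e a b
    | inl a, inr b => a == b
    | inr a, inl b => a == b
    | inr _, inr _ => false
    end.

(* path P_n on vertices 'I_n (x_1..x_n shifted to 0..n-1): edges x_j x_{j+1} *)
Definition path_rel (n : nat) : rel 'I_n :=
  fun i j => (i.+1 == j :> nat) || (j.+1 == i :> nat).

(* Main.v *)
Require Import Defs.
From mathcomp Require Import all_boot all_order.
Set Implicit Arguments. Unset Strict Implicit. Unset Printing Implicit Defensive.

Definition mk n (c : 'I_n -> bool) : {set ('I_n + 'I_n)} :=
  [set x | match x with inl j => c j | inr j => ~~ c j end].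

Lemma mk_card n (c : 'I_n -> bool) : #|mk c| = n.
Proof.
have -> : mk c = [set (if c j then inl j else inr j) | j : 'I_n].
  apply/setP => -[j|j]; rewrite inE; apply/idP/imsetP.
  - by move=> cj; exists j => //; rewrite cj.
  - by case=> k _; case ck: (c k) => // -[->].
  - by move=> cj; exists j => //; rewrite (negbTE cj).
  - by case=> k _; case ck: (c k) => // -[->]; rewrite ck.
rewrite card_imset ?card_ord // => a b.
by case: (c a); case: (c b) => // -[].
Qed.

Lemma mk_in n (c : 'I_n -> bool) :
  (forall a b, c a -> c b -> ~~ path_rel a b) ->
  mk c \in indep_r (pendant (@path_rel n)) n.
Proof.
move=> H; rewrite inE mk_card eqxx andbT.
apply/forall_inP => x; rewrite inE => hx; apply/forall_inP => y; rewrite inE => hy.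
case: x hx => [a|a] ha; case: y hy => [b|b] hb //=.
- exact: H.
- by apply/eqP => ab; move: hb; rewrite -ab ha.
- by apply/eqP => ab; move: ha; rewrite ab hb.
Qed.

Lemma indepP (T : finType) (e : rel T) A x y :
  indep_set e A -> x \in A -> y \in A -> ~~ e x y.
Proof. by move=> /forall_inP H hx hy; move/forall_inP: (H x hx); apply. Qed.

Lemma onehit n A : A \in indep_r (pendant (@path_rel n)) n ->
  forall j, (inl j \in A) = (inr j \notin A).
Proof.
rewrite inE => /andP [hi /eqP hc] j.
pose f (x : ('I_n + 'I_n)%type) := match x with inl j => j | inr j => j end.
have finj : {in A &, injective f}.
  move=> [a|a] [b|b] ha hb //= ab; rewrite ?ab //.
  - by have := indepP hi ha hb; rewrite /= ab eqxx.
  - by have := indepP hi ha hb; rewrite /= ab eqxx.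
have : f @: A = setT.
  by apply/eqP; rewrite eqEcard subsetT cardsT card_ord card_in_imset // hc leqnn andbT.
move/setP/(_ j); rewrite inE => /imsetP [x hx ej].
apply/idP/idP.
- move=> hl; apply/negP => hr; by have := indepP hi hl hr; rewrite /= eqxx.
- case: x hx ej => a ha -> //= hn; by rewrite ha in hn.
Qed.

Lemma disj_E0 n A B : A \in indep_r (pendant (@path_rel n)) n ->
  B \in indep_r (pendant (@path_rel n)) n -> A :&: B = set0 ->
  (forall h : 0 < n, inl (Ordinal h) \in A) -> A = mk (fun j : 'I_n => ~~ odd j).
Proof.
move=> hA hB hAB h0.
have hdis x : x \in A -> x \in B -> False.
  by move=> a b; have := in_set0 x; rewrite -hAB inE a b.
have hBA j : (inl j \in B) = (inl j \notin A).
  case hj: (inl j \in A).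
  - by apply/negP => hb; exact: hdis hj hb.
  - rewrite onehit //; apply/negP => hb; apply: (hdis (inr j)) hb.
    by have := onehit hA j; rewrite hj => /esym/negbFE.
have iA : indep_set (pendant (@path_rel n)) A by move: hA; rewrite inE => /andP[].
have iB : indep_set (pendant (@path_rel n)) B by move: hB; rewrite inE => /andP[].
have key m (hm : m < n) : (inl (Ordinal hm) \in A) = ~~ odd m.
  elim: m hm => [|m IH] hm; first by rewrite h0.
  have hm' : m < n by apply: ltnW.
  have adj : path_rel (Ordinal hm') (Ordinal hm) by rewrite /path_rel /= eqxx.
  rewrite /= -(IH hm').
  case hx: (inl (Ordinal hm') \in A) => /=.
  - apply/negP => hy; have := indepP iA hx hy; by rewrite /pendant adj.
  - apply/negPn/negP => hy.
    have hx' : inl (Ordinal hm') \in B by rewrite hBA hx.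
    have hy' : inl (Ordinal hm) \in B by rewrite hBA.
    have := indepP iB hx' hy'; by rewrite /pendant adj.
apply/setP => -[[j hj]|[j hj]]; rewrite inE /=; first exact: key.
by rewrite -key onehit // negbK.
Qed.

From mathcomp Require Import zify.

Lemma two_miss n (v : ('I_n + 'I_n)%type) : 4 <= n ->
  exists a b, [/\ a \in indep_r (pendant (@path_rel n)) n,
    b \in indep_r (pendant (@path_rel n)) n, a != b, v \notin a & v \notin b].
Proof.
move=> n4; case: v => j.
- have hk0 : (if val j == 0 then 1 else 0) < n by case: ifP => _; lia.
  pose k : 'I_n := Ordinal hk0.
  have hk : ((j : nat) = 0 /\ (k : nat) = 1) \/ ((j : nat) <> 0 /\ (k : nat) = 0).
    by rewrite /k /=; case: eqP => ?; [left|right].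
  exists (mk (fun _ : 'I_n => false)), (mk (fun i : 'I_n => i == k)); split.
  + exact: mk_in.
  + apply: mk_in => a b /eqP -> /eqP ->; rewrite /path_rel.
    by apply/norP; split; apply/eqP; lia.
  + apply/eqP => eab; have : inl k \in mk (fun i : 'I_n => i == k) by rewrite inE.
    by rewrite -eab inE.
  + by rewrite inE.
  + rewrite inE; apply/eqP => ejk; have : (j : nat) = k by rewrite ejk.
    lia.
- have hk0 : (if val j < 2 then 3 else 0) < n by case: ifP => _; lia.
  pose k : 'I_n := Ordinal hk0.
  have hk : ((j : nat) < 2 /\ (k : nat) = 3) \/ (2 <= (j : nat) /\ (k : nat) = 0).
    rewrite /k /=.
    by case: ifP => ?; [left|right; lia].
  have hjn := ltn_ord j.
  exists (mk (fun i : 'I_n => i == j)), (mk (fun i : 'I_n => (i == j) || (i == k))); split.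
  + apply: mk_in => a b /eqP -> /eqP ->; rewrite /path_rel.
    by apply/norP; split; apply/eqP; lia.
  + apply: mk_in => a b /orP[]/eqP -> /orP[]/eqP ->; rewrite /path_rel;
    by apply/norP; split; apply/eqP; lia.
  + apply/eqP => eab.
    have : inl k \in mk (fun i : 'I_n => (i == j) || (i == k)) by rewrite inE eqxx orbT.
    rewrite -eab inE; apply/negP/eqP => ejk; have : (j : nat) = k by rewrite ejk.
    lia.
  + by rewrite inE eqxx.
  + by rewrite inE eqxx.
Qed.

Theorem lemma9 (n : nat) : 4 <= n -> ~ EKR (pendant (@path_rel n)) n.
Proof.
move=> n4 [v hv].
set I := indep_r (pendant (@path_rel n)) n in hv *.
set F := I :\ mk (fun j : 'I_n => ~~ odd j).
have h0 : 0 < n by lia.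
have Fint : intersecting F.
  apply/forall_inP => A; rewrite in_setD1 => /andP[nA hA].
  apply/forall_inP => B; rewrite in_setD1 => /andP[nB hB].
  apply/negP => /eqP hAB.
  have ord0E (h : 0 < n) : Ordinal h = Ordinal h0 by apply: val_inj.
  case hz: (inl (Ordinal h0) \in A).
  - move/eqP: nA; apply; apply: (disj_E0 hA hB hAB) => h; by rewrite ord0E.
  - move/eqP: nB; apply; apply: (disj_E0 hB hA); first by rewrite setIC.
    move=> h; rewrite ord0E onehit //; apply/negP => hr.
    have : inr (Ordinal h0) \in A by have := onehit hA (Ordinal h0); rewrite hz => /esym/negbFE.
    move=> ha; have : inr (Ordinal h0) \in A :&: B by rewrite inE ha hr.
    by rewrite hAB inE.
have hmax : #|F| <= max_intersecting (pendant (@path_rel n)) n.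
  by rewrite /max_intersecting; apply: leq_bigmax_cond; rewrite Fint subsetDl.
have hIF : #|I| <= (#|F|).+1.
  by rewrite (cardsD1 (mk (fun j : 'I_n => ~~ odd j)) I); case: (_ \in I).
have [a [b [aI bI ab va vb]]] := two_miss v n4.
have hS : star_r (pendant (@path_rel n)) n v \subset (I :\ a) :\ b.
  apply/subsetP => A; rewrite !inE => /andP[AI vA]; rewrite AI andbT.
  apply/andP; split; apply/eqP => eA; [move: vb|move: va]; by rewrite -eA vA.
have hc : #|(I :\ a) :\ b| + 2 = #|I|.
  rewrite (cardsD1 a I) aI (cardsD1 b (I :\ a)) in_setD1 eq_sym ab bI /=; lia.
have := subset_leq_card hS; lia.
Qed.
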